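(* Let $q$ be a prime power, $1\le s<t$ integers, $\{u_1,\dots,u_t\}$ an $\mathbb{F}_q$-basis of $\mathbb{F}_{q^t}$, $W$ an arbitrary $\mathbb{F}_q$-subspace of $\mathbb{F}_{q^t}$ of dimension $s$, $A\subseteq\mathbb{F}_{q^t}$ and $\alpha^*\in A$. Let $L_W(x)=\prod_{w\in W}(x-w)$ and $g_i(x)=L_W\big(u_i(x-\alpha^* )\big)/(x-\alpha^* )$ for $i=1,\dots,t$. Then for every $\alpha\in A\setminus\{\alpha^*\}$, the set $\{g_1(\alpha),\dots,g_t(\alpha)\}$ has rank at most $t-s$ over $\mathbb{F}_q$. *)

(* Defs.v *)
From HB Require Import structures.
From mathcomp Require Import all_boot all_order all_algebra all_field.
Set Implicit Arguments. Unset Strict Implicit. Unset Printing Implicit Defensive.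
Import GRing.Theory.
Local Open Scope ring_scope.

(* F = F_q (any finite field), L = F_{q^t} a finite extension of F.
   finvect_type L is L with its canonical finite-type structure. *)

Definition subspace_poly_eval (F : finFieldType) (L : fieldExtType F)
  (W : {vspace L}) (y : L) : L :=
  \prod_(w : finvect_type L | (w : L) \in W) (y - w).

Definition g_fun (F : finFieldType) (L : fieldExtType F)
  (W : {vspace L}) (a0 ui x : L) : L :=
  subspace_poly_eval W (ui * (x - a0)) / (x - a0).

(* Main.v *)
Require Import Defs.
From HB Require Import structures.
From mathcomp Require Import all_boot all_order all_algebra all_field.
From mathcomp Require Import ring.
Set Implicit Arguments. Unset Strict Implicit. Unset Printing Implicit Defensive.
Import GRing.Theory.
Local Open Scope ring_scope.

Section S.
Variables (F : finFieldType) (L : fieldExtType F) (W : {vspace L}).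
Local Notation P := (subspace_poly_eval W).
Let r : seq L := [seq w <- index_enum (finvect_type L) | (w : L) \in W].

Lemma PE z : P z = \prod_(w <- r) (z - w).
Proof. by rewrite /subspace_poly_eval big_filter. Qed.

Lemma mem_r w : (w \in r) = (w \in W).
Proof. rewrite mem_filter; apply/andb_idr => _; exact: (mem_index_enum (w : finvect_type L)). Qed.

Lemma P_W w : w \in W -> P w = 0.
Proof.
move=> hw; rewrite PE (big_rem w) ?mem_r //= subrr mul0r //.
Qed.

Lemma P_shift y w : w \in W -> P (w + y) = P y.
Proof.
move=> hw; rewrite /subspace_poly_eval.
rewrite (reindex_inj (addIr (w : finvect_type L))) /=.
apply: eq_big => v; first by rewrite rpredDr.
move=> _; ring.
Qed.

Lemma P_add x y : P (x + y) = P x + P y.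
Proof.
pose p1 := \prod_(w <- r) ('X - (w - y)%:P).
pose p2 := \prod_(w <- r) ('X - w%:P).
pose Q := p1 - p2 - (P y)%:P.
have E z : Q.[z] = P (z + y) - P z - P y.
  rewrite /Q !hornerD !hornerN hornerC !horner_prod !PE; congr (_ - _ - _).
    by apply: eq_bigr => w _; rewrite hornerXsubC; ring.
  by apply: eq_bigr => w _; rewrite hornerXsubC.
have W0 : (0:L) \in W := mem0v W.
have r0 : (0 < size r)%N.
  by case: r (mem_r 0) => //; rewrite W0.
have s1 : size p1 = (size r).+1 by rewrite size_prod_XsubC.
have s2 : size p2 = (size r).+1 by rewrite size_prod_XsubC.
have Q0 : Q = 0.
  apply: (@roots_geq_poly_eq0 _ _ r).
  - apply/allP => w; rewrite mem_r => hw.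
    by rewrite rootE E (P_W hw) (P_shift y hw) subr0 subrr.
  - exact: (filter_uniq _ (index_enum_uniq (finvect_type L))).
  apply/leq_sizeP => j hj; rewrite /Q !coefB coefC.
  have -> : (j == 0%N) = false by apply/negbTE; rewrite -lt0n (leq_trans r0 hj).
  rewrite subr0; move: hj; rewrite leq_eqVlt => /orP [/eqP <-|hj].
    have l1 := lead_coef_prod_XsubC r predT (fun w => w - y).
    have l2 := lead_coef_prod_XsubC r predT (fun w => w).
    rewrite /lead_coef size_prod_XsubC /= in l1; rewrite /lead_coef size_prod_XsubC /= in l2.
    by rewrite /p1 /p2 l1 l2 subrr.
  by rewrite !nth_default ?subrr // ?s1 ?s2.
have := E x; rewrite Q0 horner0 => /esym/eqP.
by rewrite subr_eq0 subr_eq => /eqP ->; rewrite addrC.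
Qed.

Lemma expF_pow (c : F) k : c ^+ (#|F| ^ k) = c.
Proof.
elim: k => [|k IH]; first by rewrite expr1.
by rewrite expnS exprM expf_card IH.
Qed.

Lemma P_scale (c : F) x : P (c *: x) = c *: P x.
Proof.
have [->|c0] := eqVneq c 0.
  by rewrite !scale0r (P_W (mem0v W)).
rewrite /subspace_poly_eval.
rewrite (reindex_inj (scalerI c0 : injective (fun v : finvect_type L => c *: v))) /=.
rewrite (eq_bigl (fun v : finvect_type L => (v : L) \in W)); last first.
  move=> v /=; apply/idP/idP => hv; last exact: memvZ.
  by rewrite -(scalerK c0 v); apply: memvZ.
under eq_bigr do rewrite -scalerBr.
rewrite scaler_prod prodr_const.
by rewrite (@card_vspace F (finvect_type L) _ W) expF_pow.
Qed.
End S.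

Definition fmap (F : finFieldType) (L : fieldExtType F) (W : {vspace L}) (d y : L) : L :=
  subspace_poly_eval W (y * d) / d.

Lemma fmap_lin (F : finFieldType) (L : fieldExtType F) (W : {vspace L}) (d : L) :
  linear (fmap W d).
Proof.
move=> a x y; rewrite /fmap mulrDl -scalerAl P_add P_scale mulrDl scalerAl //.
Qed.

HB.instance Definition _ (F : finFieldType) (L : fieldExtType F) (W : {vspace L}) (d : L) :=
  GRing.isLinear.Build F L L *:%R (fmap W d) (fmap_lin W d).

Definition rdiv (F : finFieldType) (L : fieldExtType F) (d y : L) : L := y / d.

Lemma rdiv_lin (F : finFieldType) (L : fieldExtType F) (d : L) : linear (@rdiv F L d).
Proof. by move=> a x y; rewrite /rdiv mulrDl scalerAl. Qed.

HB.instance Definition _ (F : finFieldType) (L : fieldExtType F) (d : L) :=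
  GRing.isLinear.Build F L L *:%R (@rdiv F L d) (rdiv_lin d).

From mathcomp Require Import zify.

Theorem lemma8 (F : finFieldType) (L : fieldExtType F) (q s t : nat)
  (hq : #|F| = q) (hs : (1 <= s)%N) (hst : (s < t)%N)
  (ht : \dim (fullv : {vspace L}) = t)
  (u : t.-tuple L) (hu : basis_of fullv u)
  (W : {vspace L}) (hW : \dim W = s)
  (A : {pred L}) (a0 : L) (ha0 : a0 \in A) :
  forall a : L, a \in A -> a != a0 ->
    (\dim <<[seq g_fun W a0 ui a | ui <- u]>>%VS <= t - s)%N.
Proof.
move=> a _ ha.
have d0 : a - a0 != 0 by rewrite subr_eq0.
pose fl : 'End(L) := linfun (fmap W (a - a0)).
pose gl : 'End(L) := linfun (@rdiv F L (a - a0)).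
have -> : [seq g_fun W a0 ui a | ui <- u] = map fl u.
  by apply: eq_map => ui; rewrite lfunE.
rewrite -limg_span.
move: hu => /andP [/eqP -> _].
have sub : (gl @: W <= lker fl)%VS.
  apply/subvP => v /memv_imgP [w hw ->].
  by rewrite memv_ker !lfunE /= /fmap /rdiv divfK // (P_W hw) mul0r.
have dg : \dim (gl @: W) = s.
  rewrite limg_dim_eq ?hW //.
  have /eqP -> : lker gl == 0%VS.
    apply/lker0P => y z; rewrite !lfunE /= /rdiv.
    by apply: mulIf; rewrite invr_neq0.
  by rewrite capv0.
have := dimvS sub; rewrite dg.
have := limg_ker_dim fl fullv; rewrite capfv ht.
lia.
Qed.
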